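(* Let $F=K_{a_1,\ldots,a_r}$ be an almost balanced complete $r$-partite graph with $r\ge 2$ and $a_1\ge\cdots\ge a_r\ge 1$, let $\ell=a_1+\cdots+a_r$, and let $m=m_{r,\ell}$. Then \[ \binom{\ell}{2}>m\sum_{k=1}^{r}\binom{a_k}{2}. \]
   Context: $K_{a_1,\ldots,a_r}$ is the complete $r$-partite graph with part sizes $a_1,\ldots,a_r$; it is almost balanced if it is not a complete graph (so $\ell\ge r+1$) and $\binom{a_1-a_r}{2}<a_r$. $m_{r,\ell}$ is the unique integer $k\ge r$ maximizing $f(k)=\frac{(k-1)(k-2)\cdots(k-r+1)}{k^{\ell-1}}$ over all integers $k\ge r$. *)

(* Defs.v *)
From mathcomp Require Import all_boot all_order all_algebra.
Set Implicit Arguments. Unset Strict Implicit. Unset Printing Implicit Defensive.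
Import Order.TTheory GRing.Theory Num.Theory.

(* Part sizes are given as a : nat -> nat, with a_1, ..., a_r = a 1, ..., a r. *)

Definition ell_sum (r : nat) (a : nat -> nat) : nat := \sum_(1 <= i < r.+1) a i.

(* K_{a_1,...,a_r} is almost balanced: not a complete graph (l >= r+1)
   and binom(a_1 - a_r, 2) < a_r. *)
Definition almost_balanced (r : nat) (a : nat -> nat) : Prop :=
  (r + 1 <= ell_sum r a)%N /\ ('C(a 1 - a r, 2) < a r)%N.

Definition fmr (r l k : nat) : rat :=
  ((\prod_(1 <= i < r) (k - i)%:R) / (k%:R ^+ (l - 1)))%R.

(* k is an integer >= r maximizing f over all integers >= r
   (the paper's m_{r,l} is the unique such k). *)
Definition is_m_rl (r l k : nat) : Prop :=
  (r <= k)%N /\ forall j : nat, (r <= j)%N -> (fmr r l j <= fmr r l k)%R.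

Definition sum_binom2 (r : nat) (a : nat -> nat) : nat :=
  \sum_(1 <= k < r.+1) 'C(a k, 2).

(* Main.v *)
Require Import Defs.
From Stdlib Require Import ZArith Lia Psatz.
Open Scope Z_scope.

Lemma Kp_nonneg (r b d X : Z) : 2 <= r -> 1 <= b -> 1 <= d -> d*(d-1) <= 2*(b-1) -> 0 <= X ->
  4*((r-1)*(r*b+X-r) - X*(r*d-X)) >= (2*X - r*d + r - 1)^2 + r*(r-2)*(d*d-1) - 1.
Proof. intros. assert (r*(r-1)*(d*(d-1)) <= r*(r-1)*(2*(b-1))) by (apply Z.mul_le_mono_nonneg_l; nia). nia. Qed.

Lemma Kp_ge0 (r b d X : Z) : 2 <= r -> 1 <= b -> 0 <= d -> d*(d-1) <= 2*(b-1) -> 0 <= X ->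
  0 <= (r-1)*(r*b+X-r) - X*(r*d-X).
Proof.
  intros. destruct (Z.eq_dec d 0) as [->|Hd].
  - assert (0 <= (r-1)*(r*(b-1)+X)) by (apply Z.mul_nonneg_nonneg; nia). nia.
  - pose proof (Kp_nonneg r b d X H ltac:(lia) ltac:(lia) H2 H3).
    assert (0 <= r*(r-2)*(d*d-1)) by (apply Z.mul_nonneg_nonneg; nia).
    assert (0 <= (2*X - r*d + r - 1)^2) by nia.
    lia.
Qed.
Lemma GA (l Y K : Z) : 0 <= Y <= l -> 0 <= K -> Y*Y - l*Y <= l*l*K.
Proof. intros. assert (0 <= Y*(l-Y)) by nia. assert (0 <= l*l*K) by (apply Z.mul_nonneg_nonneg; nia). nia. Qed.
Lemma GB (l Y K X : Z) : 0 <= X -> Y <= X*l -> 0 <= l < Y -> X*X - X <= K -> Y*Y - l*Y <= l*l*K.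
Proof. intros.
  assert (HX1 : 1 <= X) by nia.
  assert (h1 : Y*(Y-l) <= X*l*(Y-l)) by (apply Z.mul_le_mono_nonneg_r; lia).
  assert (h2 : X*l*(Y-l) <= X*l*((X-1)*l)) by (apply Z.mul_le_mono_nonneg_l; nia).
  assert (h3 : l*l*(X*X-X) <= l*l*K) by (apply Z.mul_le_mono_nonneg_l; nia).
  nia. Qed.
Lemma GC (r l Y K : Z) : 3 <= r -> 7*Y <= 4*r*l -> 0 <= l < Y -> 3*r*(r-2) - 1 <= 4*K -> Y*Y - l*Y <= l*l*K.
Proof. intros.
  assert (h1 : 7*Y*(7*Y-7*l) <= 4*r*l*(7*Y-7*l)) by (apply Z.mul_le_mono_nonneg_r; lia).
  assert (h2 : 4*r*l*(7*Y-7*l) <= 4*r*l*((4*r-7)*l)) by (apply Z.mul_le_mono_nonneg_l; nia).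
  assert (h3 : 4*(16*r*r - 28*r) <= 49*(3*r*(r-2)-1)) by nia.
  assert (h4 : l*l*(4*(16*r*r - 28*r)) <= l*l*(49*(4*K))) by (apply Z.mul_le_mono_nonneg_l; nia).
  nia. Qed.
Lemma L7 (r b d X : Z) : 3 <= r -> 2 <= d -> 1 <= b -> 0 <= X -> d*(d-1) <= 2*(b-1) ->
  7 * (X*(r*d-X)) <= 4*r*(r*b+X).
Proof. intros.
  assert (0 <= (r*d-2*X)*(r*d-2*X)) by apply Z.square_nonneg.
  assert (4*(X*(r*d-X)) <= r*r*d*d) by nia.
  assert (0 <= r*r*((d-4)*(d-4))) by (apply Z.mul_nonneg_nonneg; apply Z.square_nonneg).
  assert (r*(d*(d-1)) <= r*(2*(b-1))) by (apply Z.mul_le_mono_nonneg_l; nia).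
  assert (r*(r*(d*(d-1))) <= r*(r*(2*(b-1)))) by (apply Z.mul_le_mono_nonneg_l; nia).
  assert (0 <= r * X) by nia.
  nia.
Qed.
Lemma LK3 (r d X K : Z) : 3 <= r -> 2 <= d ->
  4*K >= (2*X - r*d + r - 1)^2 + r*(r-2)*(d*d-1) - 1 -> 3*r*(r-2) - 1 <= 4*K.
Proof. intros.
  assert (0 <= (2*X - r*d + r - 1)^2) by (rewrite Z.pow_2_r; apply Z.square_nonneg).
  assert (r*(r-2)*3 <= r*(r-2)*(d*d-1)) by (apply Z.mul_le_mono_nonneg_l; nia).
  lia.
Qed.
Lemma GY (r b d X : Z) : 2 <= r -> 1 <= b -> 0 <= d -> d*(d-1) <= 2*(b-1) -> 0 <= X ->
  0 <= X*(r*d-X) ->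
  (X*(r*d-X))*(X*(r*d-X)) - (r*b+X)*(X*(r*d-X)) <= (r*b+X)*(r*b+X)*((r-1)*((r*b+X)-r) - X*(r*d-X)).
Proof.
  intros Hr Hb Hd0 Hdb HX HY0.
  pose proof (Kp_ge0 r b d X Hr Hb Hd0 Hdb HX) as HK.
  set (l := r*b+X) in *. set (Y := X*(r*d-X)) in *.
  set (K := (r-1)*(l-r) - Y) in *.
  assert (Hl : 0 <= l) by (unfold l; nia).
  destruct (Z_le_gt_dec Y l) as [HYl|HYl].
  { apply GA; lia. }
  destruct (Z.eq_dec d 0) as [Hd|Hd].
  { exfalso. subst d. unfold Y in *. nia. }
  pose proof (Kp_nonneg r b d X Hr Hb ltac:(lia) Hdb HX) as HK4. fold l Y K in HK4.
  destruct (Z.eq_dec d 1) as [Hd1|Hd1].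
  - subst d.
    assert (HA : Y <= X*l).
    { unfold Y, l. assert (r - X <= r*b+X) by nia. apply Z.mul_le_mono_nonneg_l; lia. }
    assert (HB : X*X - X <= K).
    { assert (E : r*(r-2)*(1*1-1) = 0) by ring. rewrite E in HK4.
      assert (E2 : (2*X - r*1 + r - 1)^2 = 4*X*X - 4*X + 1) by ring. lia. }
    apply (GB l Y K X); lia.
  - destruct (Z.eq_dec r 2) as [Hr2|Hr2].
    + exfalso. subst r. unfold Y, l in HYl.
      assert (0 <= (2*d-1-2*X)*(2*d-1-2*X)) by nia. nia.
    + apply (GC r l Y K); try lia.
      * unfold Y, l. apply L7; lia.
      * apply (LK3 r d X K); lia.
Qed.
Lemma core_i (r b d X W : Z) : 2 <= r -> 1 <= b -> 0 <= d -> d*(d-1) <= 2*(b-1) -> 0 <= X ->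
  0 <= W <= d*X -> r*W - X*X <= (r-1)*((r*b+X)-r).
Proof. intros.
  pose proof (Kp_ge0 r b d X H H0 H1 H2 H3).
  assert (r*W <= r*(d*X)) by (apply Z.mul_le_mono_nonneg_l; lia).
  nia.
Qed.

Lemma core_ii (r b d X W : Z) : 2 <= r -> 1 <= b -> 0 <= d -> d*(d-1) <= 2*(b-1) -> 0 <= X ->
  0 <= W <= d*X -> r+1 <= r*b+X ->
  let l := r*b+X in let D := r*W - X*X in
  D*l*l*(l-1) + D*D*(l-2) < l*l*l*(r-1)*(l-r).
Proof. intros Hr Hb Hd Hdb HX HW Hl l D.
  assert (HRHS : 0 < l*l*l*(r-1)*(l-r)).
  { assert (0 < l) by lia. assert (0 < l*l) by nia. assert (0 < l*l*l) by nia.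
    assert (0 < (r-1)*(l-r)) by nia. nia. }
  assert (HrW : r*W <= r*(d*X)) by (apply Z.mul_le_mono_nonneg_l; lia).
  assert (HrW0 : 0 <= r*W) by nia.
  destruct (Z_le_gt_dec D 0) as [HD|HD].
  - assert (HXl : X <= l) by (unfold l; nia).
    assert (HXX : X*X <= l*l) by nia.
    assert (HDl : - (l*l) <= D) by (unfold D; lia).
    assert (h1 : l*l <= l*l*(l-1) + D*(l-2)).
    { assert (-(l*l)*(l-2) <= D*(l-2)) by (apply Z.mul_le_mono_nonneg_r; lia). nia. }
    assert (h2 : D*(l*l*(l-1) + D*(l-2)) <= 0).
    { assert (0 <= l*l) by nia. apply Z.mul_nonpos_nonneg; lia. }
    assert (E : D*l*l*(l-1) + D*D*(l-2) = D*(l*l*(l-1) + D*(l-2))) by ring.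
    lia.
  - set (Y := X*(r*d-X)).
    assert (HDY : D <= Y) by (unfold D, Y; nia).
    pose proof (GY r b d X Hr Hb Hd Hdb HX ltac:(fold Y; lia)) as HG. fold l Y in HG.
    assert (HG2 : D*(l*(l-1)) + D*D <= (r-1)*(l-r)*(l*l)).
    { assert (h : 0 <= (Y-D)*(l*l-l+Y+D)).
      { apply Z.mul_nonneg_nonneg; [lia|]. assert (l <= l*l) by nia. lia. }
      nia. }
    assert (h3 : l*(D*(l*(l-1)) + D*D) <= l*((r-1)*(l-r)*(l*l))) by (apply Z.mul_le_mono_nonneg_l; lia).
    assert (h4 : 0 < D*D) by nia.
    nia.
Qed.
Lemma final_Z (r l P j : Z) : 2 <= r -> r+1 <= l -> r <= j -> l <= P ->
  r*P - l*l <= (r-1)*(l-r) ->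
  (r*P - l*l)*l*l*(l-1) + (r*P - l*l)*(r*P - l*l)*(l-2) < l*l*l*(r-1)*(l-r) ->
  (j+1-r)*(2*(j*j) + 2*l*j + l*(l-1)) <= 2*(j+1)*(j*j) ->
  (j+1)*(P-l) < l*(l-1).
Proof.
  intros Hr Hl Hj HP HD Hkey Hbin.
  set (s2 := P - l). set (c2 := l*(l-1)). set (D := r*P - l*l) in *.
  set (B := 2*l + c2 - 2*r*l).
  apply Z.nlt_ge in Hbin as Hbin'. apply Z.lt_nge. intro Hc.
  assert (Hq : 2*(l-r)*(j*j) + B*j - (r-1)*c2 <= 0).
  { assert (E : 2*(j+1)*(j*j) - (j+1-r)*(2*(j*j) + 2*l*j + c2) = -(2*(l-r)*(j*j) + B*j - (r-1)*c2)) by (unfold B; ring).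
    lia. }
  assert (Hs2 : 0 <= s2) by (unfold s2; lia).
  set (X0 := c2 - s2). set (X := j*s2).
  assert (HPl : P < l*l).
  { assert (h1 : (r-1)*(l-r) < (r-1)*(l*l)) by (apply Z.mul_lt_mono_pos_l; [lia|]; assert (l <= l*l) by (rewrite <- (Z.mul_1_l l) at 1; apply Z.mul_le_mono_nonneg_r; lia); lia).
    assert (h2 : r*P < r*(l*l)) by (unfold D in HD; lia).
    apply (Z.mul_lt_mono_pos_l r); lia. }
  assert (HX0 : 0 < X0).
  { assert (E : X0 = l*l - P) by (unfold X0, c2, s2; ring). lia. }
  assert (HXX0 : X0 <= X).
  { assert (E : (j+1)*s2 = X + s2) by (unfold X; ring). unfold X0. lia. }
  set (Q2 := fun t : Z => 2*(l-r)*(t*t) + B*s2*t - (r-1)*c2*(s2*s2)).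
  assert (HQX : Q2 X <= 0).
  { assert (E : Q2 X = (s2*s2)*(2*(l-r)*(j*j) + B*j - (r-1)*c2)) by (unfold Q2, X; cbv beta; ring).
    rewrite E. apply Z.mul_nonneg_nonpos; [apply Z.square_nonneg|lia]. }
  assert (HQX0 : 0 < Q2 X0).
  { assert (E : r * Q2 X0 = (l-1)*(l*l*l*(r-1)*(l-r) - (D*l*l*(l-1) + D*D*(l-2))))
      by (unfold Q2, X0, B, c2, s2, D; cbv beta; ring).
    assert (0 < (l-1)*(l*l*l*(r-1)*(l-r) - (D*l*l*(l-1) + D*D*(l-2)))) by (apply Z.mul_pos_pos; lia).
    apply (Z.mul_pos_cancel_l r); lia. }
  assert (HQ0 : Q2 0 <= 0).
  { unfold Q2. assert (0 <= (r-1)*c2*(s2*s2)). { apply Z.mul_nonneg_nonneg; [|apply Z.square_nonneg]. unfold c2; apply Z.mul_nonneg_nonneg; [lia| apply Z.mul_nonneg_nonneg; lia]. } lia. }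
  assert (Hlin : 0 < 2*(l-r)*X0 + B*s2).
  { assert (E : Q2 X0 - Q2 0 = X0*(2*(l-r)*X0 + B*s2)) by (unfold Q2; cbv beta; ring).
    assert (0 < X0*(2*(l-r)*X0 + B*s2)) by lia.
    apply (Z.mul_pos_cancel_l X0); lia. }
  assert (E : Q2 X - Q2 X0 = (X - X0)*(2*(l-r)*(X+X0) + B*s2)) by (unfold Q2; cbv beta; ring).
  assert (0 <= (X - X0)*(2*(l-r)*(X+X0) + B*s2)).
  { apply Z.mul_nonneg_nonneg; [lia|]. assert (0 <= 2*(l-r)*X) by (unfold X; apply Z.mul_nonneg_nonneg; [lia|apply Z.mul_nonneg_nonneg; lia]). lia. }
  lia.
Qed.

Lemma final_r (r l P : Z) : 2 <= r -> r+1 <= l -> r*P - l*l <= (r-1)*(l-r) -> r*(P-l) < l*(l-1).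
Proof. intros. assert (E : (r-1)*(l-r) = (r-1)*l - (r-1)*r) by ring. assert (E2 : r*(P-l) = r*P - r*l) by ring. assert (E3 : l*(l-1) = l*l - l) by ring. assert (0 < (r-1)*r) by (apply Z.mul_pos_pos; lia). lia. Qed.
Lemma top_Z (r b d X W l P m : Z) : 2 <= r -> 1 <= b -> 0 <= d -> d*(d-1) <= 2*(b-1) -> 0 <= X ->
  0 <= W <= d*X -> l = r*b+X -> P = r*b*b + 2*b*X + W -> r+1 <= l -> r <= m ->
  (r < m -> (m-r)*(2*((m-1)*(m-1)) + 2*l*(m-1) + l*(l-1)) <= 2*m*((m-1)*(m-1))) ->
  m*(P-l) < l*(l-1).
Proof.
  intros Hr Hb Hd Hdb HX HW El EP Hl Hm Hbin.
  pose proof (core_i r b d X W Hr Hb Hd Hdb HX HW) as Hi.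
  pose proof (core_ii r b d X W Hr Hb Hd Hdb HX HW ltac:(lia)) as Hii. cbv zeta in Hii.
  assert (ED : r*P - l*l = r*W - X*X) by (subst l P; ring).
  rewrite <- El in Hi, Hii. rewrite <- ED in Hi, Hii.
  assert (HPl : l <= P).
  { assert (r*b <= r*b*b) by (rewrite <- (Z.mul_1_r (r*b)) at 1; apply Z.mul_le_mono_nonneg_l; nia).
    assert (X <= 2*b*X) by nia. lia. }
  destruct (Z.eq_dec m r) as [->|Hmr].
  - apply final_r; lia.
  - assert (Hb2 : (m-1+1-r)*(2*((m-1)*(m-1)) + 2*l*(m-1) + l*(l-1)) <= 2*(m-1+1)*((m-1)*(m-1))).
    { replace (m-1+1) with m by ring. apply Hbin; lia. }
    pose proof (final_Z r l P (m-1) Hr Hl ltac:(lia) HPl Hi Hii Hb2) as Hj.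
    replace (m-1+1) with m in Hj by ring. exact Hj.
Qed.
Lemma top_Z2 (r b d X W l S m u v w : Z) : 2 <= r -> 1 <= b -> 0 <= d -> d*d + 2 <= 2*b + d -> 0 <= X ->
  0 <= W -> W <= d*X -> l = r*b+X -> 2*S + l = r*b*b + 2*b*X + W -> r+1 <= l -> r <= m ->
  m = u + r -> m = v + 1 -> l = w + 1 ->
  (0 < u -> u*(2*(v*v) + 2*l*v + l*w) <= 2*m*(v*v)) ->
  m*(2*S) < l*w.
Proof.
  intros Hr Hb Hd Hdd HX HW0 HW El ES Hl Hm Eu Ev Ew Hbin.
  assert (Hdb : d*(d-1) <= 2*(b-1)) by lia.
  assert (H := top_Z r b d X W l (2*S + l) m Hr Hb Hd Hdb HX ltac:(lia) El ltac:(lia) Hl Hm).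
  replace (m * (2*S + l - l)) with (m*(2*S)) in H by ring.
  replace (l*(l-1)) with (l*w) in H by (rewrite Ew; ring).
  apply H. intro Hrm.
  replace (m-r) with u by lia. replace (m-1) with v by lia. replace (l-1) with w by lia.
  apply Hbin; lia.
Qed.
Close Scope Z_scope.
From mathcomp Require Import all_boot all_order all_algebra.
From mathcomp Require Import zify.
Import Order.TTheory GRing.Theory Num.Theory.

Lemma mono_le (r : nat) (a : nat -> nat) :
  (forall i : nat, (1 <= i)%N -> (i < r)%N -> (a i.+1 <= a i)%N) ->
  forall i k, 1 <= i -> i + k <= r -> a (i + k) <= a i.
Proof.
move=> H i k Hi; elim: k => [|k IH] Hk; first by rewrite addn0.
rewrite addnS; apply: (leq_trans _ (IH ltac:(lia))).
apply: H; lia.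
Qed.

Lemma mono_bounds (r : nat) (a : nat -> nat) :
  (forall i : nat, (1 <= i)%N -> (i < r)%N -> (a i.+1 <= a i)%N) ->
  forall i, 1 <= i <= r -> a r <= a i <= a 1.
Proof.
move=> H i /andP[H1 H2]; apply/andP; split.
- have := @mono_le r a H i (r-i) H1; rewrite subnKC //; apply; lia.
- have := @mono_le r a H 1 (i-1) (leqnn 1); rewrite subnKC //; apply; lia.
Qed.

Lemma sum_decomp (r : nat) (a : nat -> nat) (b : nat) :
  (forall i, 1 <= i <= r -> b <= a i) ->
  let X := \sum_(1 <= i < r.+1) (a i - b) in
  let W := \sum_(1 <= i < r.+1) (a i - b) * (a i - b) in
  ell_sum r a = r * b + X /\
  \sum_(1 <= i < r.+1) a i * a i = r * b * b + 2 * b * X + W.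
Proof.
move=> Hb X W; split.
- rewrite /ell_sum /X.
  have -> : \sum_(1 <= i < r.+1) a i = \sum_(1 <= i < r.+1) (b + (a i - b)).
    by apply: eq_big_nat => i Hi; rewrite subnKC // Hb.
  by rewrite big_split /= sum_nat_const_nat subSS subn0 mulnC.
- have -> : \sum_(1 <= i < r.+1) a i * a i =
     \sum_(1 <= i < r.+1) (b * b + 2 * b * (a i - b) + (a i - b) * (a i - b)).
    apply: eq_big_nat => i Hi; have Hx := subnKC (Hb i Hi); move: Hx; move: (a i - b) => x <-; nia.
  rewrite !big_split /= sum_nat_const_nat subSS subn0 -big_distrr /=.
  by rewrite /X /W mulnA.
Qed.

Lemma leq_sum_range (m n : nat) (F G : nat -> nat) :
  (forall i, m <= i < n -> F i <= G i) ->
  \sum_(m <= i < n) F i <= \sum_(m <= i < n) G i.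
Proof.
move=> H; rewrite big_nat_cond [X in _ <= X]big_nat_cond.
by apply: leq_sum => i /andP[Hi _]; apply: H.
Qed.

Lemma W_le (r : nat) (a : nat -> nat) (b d : nat) :
  (forall i, 1 <= i <= r -> b <= a i <= b + d) ->
  \sum_(1 <= i < r.+1) (a i - b) * (a i - b) <= d * \sum_(1 <= i < r.+1) (a i - b).
Proof.
move=> H; rewrite big_distrr /=; apply: leq_sum_range => i Hi.
have := H i Hi; rewrite mulnC; move=> /andP[h1 h2]; apply: leq_mul => //; lia.
Qed.

Lemma two_bin2 n : 2 * 'C(n, 2) = n * (n - 1).
Proof. by rewrite -mul_bin_diag bin1 subn1. Qed.

Lemma S_rel (r : nat) (a : nat -> nat) :
  2 * sum_binom2 r a + ell_sum r a = \sum_(1 <= i < r.+1) a i * a i.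
Proof.
rewrite /sum_binom2 /ell_sum big_distrr /= -big_split /=.
apply: eq_big_nat => i _; rewrite two_bin2; case: (a i) => [|x] //=; lia.
Qed.

Lemma prod_split (r m : nat) : 2 <= r -> r < m ->
  (\prod_(1 <= i < r) (m - i) = (m - 1) * \prod_(2 <= i < r) (m - i)) /\
  (\prod_(1 <= i < r) (m - 1 - i) = \prod_(2 <= i < r) (m - i) * (m - r)).
Proof.
move=> Hr Hm; split; first by rewrite big_ltn.
have -> : \prod_(1 <= i < r) (m - 1 - i) = \prod_(2 <= i < r.+1) (m - i).
  rewrite [RHS]big_add1 /=; apply: eq_big_nat => i Hi; lia.
rewrite big_nat_recr /=; last by lia.
by [].
Qed.

Lemma fmr_step (r l m : nat) : 2 <= r -> r < m -> 1 <= l ->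
  (fmr r l (m - 1) <= fmr r l m)%R -> (m - r) * m ^ (l - 1) <= (m - 1) ^ l.
Proof.
move=> Hr Hm Hl; rewrite /fmr.
have {1}-> : (\prod_(1 <= i < r) ((m - 1 - i)%N%:R : rat))%R = ((\prod_(1 <= i < r) (m - 1 - i))%N%:R)%R
  by rewrite natr_prod.
have -> : (\prod_(1 <= i < r) ((m - i)%N%:R : rat))%R = ((\prod_(1 <= i < r) (m - i))%N%:R)%R
  by rewrite natr_prod.
have [-> ->] := prod_split r m Hr Hm.
have hm1 : (0 < ((m-1)%N%:R : rat) ^+ (l - 1))%R by rewrite exprn_gt0 // ltr0n; lia.
have hm : (0 < ((m)%:R : rat) ^+ (l - 1))%R by rewrite exprn_gt0 // ltr0n; lia.
rewrite ler_pdivrMr // mulrAC ler_pdivlMr // -!natrX -!natrM ler_nat.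
set Q := \prod_(2 <= i < r) (m - i).
have HQ : 0 < Q.
  rewrite /Q big_nat_cond; apply: prodn_cond_gt0 => i /andP[/andP[_ Hi] _]; lia.
move=> H.
have : Q * ((m - r) * m ^ (l - 1)) <= Q * ((m - 1) ^ l).
  have -> : (m - 1) ^ l = (m - 1) * (m - 1) ^ (l - 1) by rewrite -expnS; congr (_ ^ _); lia.
  move: H; rewrite !mulnA [Q * (m - r)]mulnC [Q * (m - 1)]mulnC.
  by [].
by rewrite leq_pmul2l.
Qed.

Lemma binom_lb (j n : nat) :
  j ^ n.+2 + n.+2 * j ^ n.+1 + 'C(n.+2, 2) * j ^ n <= (j + 1) ^ n.+2.
Proof.
elim: n => [|n IH].
  by rewrite expn0 bin2 /=; lia.
have hC : 'C(n.+3, 2) = 'C(n.+2, 2) + n.+2 by rewrite binS bin1.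
rewrite hC (expnS (j+1)).
apply: leq_trans (leq_mul (leqnn (j+1)) IH).
rewrite !expnS; move: (j ^ n) ('C(n.+2, 2)) => p c.
nia.
Qed.

Lemma bin_hyp (r m l : nat) : 2 <= r -> r < m -> 3 <= l ->
  (m - r) * m ^ (l - 1) <= (m - 1) ^ l ->
  (m - r) * (2 * ((m - 1) * (m - 1)) + 2 * l * (m - 1) + l * (l - 1)) <= 2 * m * ((m - 1) * (m - 1)).
Proof.
move=> Hr Hm Hl H.
case: m Hm H => [|j] Hm H; first by lia.
case: l Hl H => [|[|n]] Hl H; try lia.
rewrite !subn1 /= in H *.
set l := n.+2.
have hb := binom_lb j n.
have hC := two_bin2 n.+2.
set C := 'C(n.+2, 2) in hb hC.
have Hp : 0 < j ^ n by rewrite expn_gt0; lia.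
move: H hb; rewrite -/l.
have -> : j ^ n.+2 = j * j * j ^ n by rewrite !expnS mulnA.
have -> : j ^ n.+1 = j * j ^ n by rewrite expnS.
have -> : (j + 1) ^ n.+2 = (j + 1) * (j + 1) ^ n.+1 by rewrite expnS.
rewrite addn1.
move: (j ^ n) Hp => p Hp; move: (j.+1 ^ n.+1) => q H hb.
have h1 : (j.+1 - r) * ((j * j + l * j + C) * p) <= (j.+1 - r) * (j.+1 * q).
  by apply: leq_mul => //; lia.
have h2 : (j.+1 - r) * (j.+1 * q) <= j.+1 * (j * j * p).
  by rewrite mulnCA; apply: leq_mul.
have h3 : ((j.+1 - r) * (j * j + l * j + C)) * p <= (j.+1 * (j * j)) * p.
  by rewrite -mulnA; apply: leq_trans h1 _; rewrite -[X in _ <= X]mulnA; apply: h2.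
rewrite leq_pmul2r // in h3.
nia.
Qed.

Theorem lemma5p2 (r : nat) (a : nat -> nat) (m : nat) :
  (2 <= r)%N ->
  (forall i : nat, (1 <= i)%N -> (i < r)%N -> (a i.+1 <= a i)%N) ->
  (1 <= a r)%N ->
  almost_balanced r a ->
  is_m_rl r (ell_sum r a) m ->
  (m * sum_binom2 r a < 'C(ell_sum r a, 2))%N.
Proof.
move=> Hr Hmono Har [Hab Hbal] [Hmr Hmax].
have Hbd : forall i, 1 <= i <= r -> a r <= a i <= a r + (a 1 - a r).
  move=> i Hi; have := @mono_bounds r a Hmono i Hi; lia.
have Hb' : forall i, 1 <= i <= r -> a r <= a i.
  by move=> i Hi; have /andP[] := Hbd i Hi.
have [El EP] := @sum_decomp r a (a r) Hb'.
have HW := @W_le r a (a r) (a 1 - a r) Hbd.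
have HS := S_rel r a.
have Hd2 := two_bin2 (a 1 - a r).
have Hl2 := two_bin2 (ell_sum r a).
move: El EP HW HS Hd2 Hl2 Hbal Hmax Hab.
set l := ell_sum r a.
set X := \sum_(1 <= i < r.+1) (a i - a r).
set W := \sum_(1 <= i < r.+1) (a i - a r) * (a i - a r).
set P := \sum_(1 <= i < r.+1) a i * a i.
set S := sum_binom2 r a.
set b := a r. set d := a 1 - b.
move=> El EP HW HS Hd2 Hl2 Hbal Hmax Hab.
have Hl3 : 3 <= l by lia.
have Hbin : r < m -> (m - r) * (2 * ((m - 1) * (m - 1)) + 2 * l * (m - 1) + l * (l - 1)) <= 2 * m * ((m - 1) * (m - 1)).
  move=> Hrm; apply: bin_hyp => //.
  apply: fmr_step => //; first by lia.
  by apply: Hmax; lia.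
have Hdd : d * d + 2 <= 2 * b + d.
  have E : d * (d - 1) + d = d * d.
    case: (d) => [|n] //. rewrite subSS subn0 mulnS; lia.
  lia.
have Hbin2 := Hbin.
move: Hbin2 Hl2 Hdd HW.
have Eu : m = (m - r) + r by lia.
have Ev : m = (m - 1) + 1 by lia.
have Ew : l = (l - 1) + 1 by lia.
move: Eu Ev Ew.
move: (m - r) (m - 1) (l - 1) => u v w Eu Ev Ew Hbin2 Hl2 Hdd HW.
have Hbin3 : 0 < u -> u * (2 * (v * v) + 2 * l * v + l * w) <= 2 * m * (v * v).
  by move=> Hu; apply: Hbin2; lia.
clear Hbin Hbin2 Hmax.
clearbody l X W P S d b.
have HZ := top_Z2 (Z.of_nat r) (Z.of_nat b) (Z.of_nat d) (Z.of_nat X) (Z.of_nat W) (Z.of_nat l) (Z.of_nat S) (Z.of_nat m) (Z.of_nat u) (Z.of_nat v) (Z.of_nat w).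
do 14 (have {HZ} HZ := HZ ltac:(lia)).
have {HZ} HZ := HZ (fun Hu => ltac:(have := Hbin3 ltac:(lia); lia)).
lia.
Qed.
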